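(* Let $\mathcal{G}\rightrightarrows M$ be a topological groupoid such that $M$ is Hausdorff. Then $$\{B\subset\mathcal{G}:\ \forall K\subset\mathcal{G}\text{ compact }\exists K'\subset\mathcal{G}\text{ compact with }KB\cup BK\subset K'\}$$ $$=\{B\subset\mathcal{G}:\ \forall K\subset M\text{ compact }\exists K'\subset\mathcal{G}\text{ compact with }(B\cap t^{-1}(K))\cup(B\cap s^{-1}(K))\subset K'\},$$ and this family $\mathcal{B}_\mathcal{G}$ is a base-bounded compatible bornology on $\mathcal{G}$ containing all compact subsets of $\mathcal{G}$.
   Context: A topological groupoid $\mathcal{G}\rightrightarrows M$ is a groupoid (arrows $\mathcal{G}$, objects $M$, target and source $t,s$, units $1_x$, inverses, multiplication $g_1g_2$ defined when $s(g_1)=t(g_2)$) with $\mathcal{G}$, $M$ topological spaces and all structure maps continuous (multiplication on the subspace of composable pairs of $\mathcal{G}\times\mathcal{G}$). For $A,B\subset\mathcal{G}$, $AB=\{ab:a\in A,b\in B,s(a)=t(b)\}$ and $B^{-1}=\{b^{-1}:b\in B\}$. A bornology on a set $X$ is a family $\mathcal{B}$ of subsets closed under taking subsets and finite unions with $\bigcup\mathcal{B}=X$. A bornology on $\mathcal{G}$ is compatible if $B^{-1}\in\mathcal{B}$ and $BB'\in\mathcal{B}$ for all $B,B'\in\mathcal{B}$, and base-bounded if $1_M=\{1_x:x\in M\}\in\mathcal{B}$. *)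

(* Defs.v *)
From HB Require Import structures.
From mathcomp Require Import all_boot all_algebra.
From mathcomp Require Import all_classical all_reals all_analysis.
Set Implicit Arguments. Unset Strict Implicit. Unset Printing Implicit Defensive.
Local Open Scope classical_set_scope.

(* A topological groupoid G ⇉ M: arrows G, objects M, target tgt, source src,
   units unit, inverse inv, multiplication mul (a total function, only
   meaningful on composable pairs, i.e. src g1 = tgt g2). *)
Record topGroupoid (G M : topologicalType) := TopGroupoid {
  tgt : G -> M;
  src : G -> M;
  unit : M -> G;
  inv : G -> G;
  mul : G -> G -> G;
  tgt_unit : forall x, tgt (unit x) = x;
  src_unit : forall x, src (unit x) = x;
  tgt_mul : forall g h, src g = tgt h -> tgt (mul g h) = tgt g;
  src_mul : forall g h, src g = tgt h -> src (mul g h) = src h;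
  mulA : forall g h k, src g = tgt h -> src h = tgt k ->
           mul g (mul h k) = mul (mul g h) k;
  unit_mul : forall g, mul (unit (tgt g)) g = g;
  mul_unit : forall g, mul g (unit (src g)) = g;
  tgt_inv : forall g, tgt (inv g) = src g;
  src_inv : forall g, src (inv g) = tgt g;
  mul_inv : forall g, mul g (inv g) = unit (tgt g);
  inv_mul : forall g, mul (inv g) g = unit (src g);
  tgt_cont : continuous tgt;
  src_cont : continuous src;
  unit_cont : continuous unit;
  inv_cont : continuous inv;
  mul_cont : {within [set p : G * G | src p.1 = tgt p.2],
               continuous (fun p : G * G => mul p.1 p.2)}
}.

Section Ops.
Context {G M : topologicalType} (GG : topGroupoid G M).

Definition setmulG (A B : set G) : set G :=
  [set g | exists a b, [/\ A a, B b, src GG a = tgt GG b & g = mul GG a b]].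

Definition setinvG (B : set G) : set G := inv GG @` B.

Definition unitsG : set G := range (unit GG).

Definition BG1 : set (set G) :=
  [set B | forall K : set G, compact K -> exists K' : set G,
     compact K' /\ setmulG K B `|` setmulG B K `<=` K'].

Definition BG2 : set (set G) :=
  [set B | forall K : set M, compact K -> exists K' : set G,
     compact K' /\ (B `&` tgt GG @^-1` K) `|` (B `&` src GG @^-1` K) `<=` K'].

Definition compatible_bornology (F : set (set G)) : Prop :=
  (forall B B', F B -> F B' -> F (setmulG B B')) /\
  (forall B, F B -> F (setinvG B)).

Definition base_bounded (F : set (set G)) : Prop := F unitsG.
End Ops.

Definition bornology {X : Type} (F : set (set X)) : Prop :=
  [/\ (forall B A, F B -> A `<=` B -> F A),
      (forall A B, F A -> F B -> F (A `|` B)) &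
      (forall x : X, exists B, F B /\ B x)].

(* Main.v *)
Require Import Defs.
From HB Require Import structures.
From mathcomp Require Import all_boot all_algebra.
From mathcomp Require Import all_classical all_reals all_analysis.
Local Open Scope classical_set_scope.

Section S.
Context (G M : topologicalType) (GG : topGroupoid G M).
Hypothesis hM : hausdorff_space M.

Lemma closed_fib : closed [set p : G * G | src GG p.1 = tgt GG p.2].
Proof.
rewrite -[X in closed X]setCK; apply: open_closedC.
rewrite openE => p /= np.
move: hM; rewrite open_hausdorff => /(_ (src GG p.1) (tgt GG p.2)).
case; first by apply/eqP.
move=> [U V] /= [/set_mem Up /set_mem Vp] [oU oV /eqP UV].
have hU : nbhs p.1 (src GG @^-1` U).
  exact: (@src_cont _ _ GG p.1 U (open_nbhs_nbhs (conj oU Up))).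
have hV : nbhs p.2 (tgt GG @^-1` V).
  exact: (@tgt_cont _ _ GG p.2 V (open_nbhs_nbhs (conj oV Vp))).
rewrite /interior /=; change (filter_prod (nbhs p.1) (nbhs p.2) (~` [set p0 : G * G | src GG p0.1 = tgt GG p0.2])); exists (src GG @^-1` U, tgt GG @^-1` V) => //=.
move=> [a b] /= [Ua Vb] e.
have : (U `&` V) (src GG a) by split => //; rewrite e.
by rewrite UV.
Qed.

Lemma compact_mul (A B : set G) : compact A -> compact B ->
  compact (setmulG GG A B).
Proof.
move=> cA cB.
have -> : setmulG GG A B = (fun p : G * G => Defs.mul GG p.1 p.2) @`
   (A `*` B `&` [set p : G * G | src GG p.1 = tgt GG p.2]).
  apply/seteqP; split => g.
    by case=> a [b [Aa Bb e ->]]; exists (a, b).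
  by case=> -[a b] /= [[Aa Bb] e] <-; exists a, b.
apply: continuous_compact.
  apply: (continuous_subspaceW _ (@Defs.mul_cont _ _ GG)); exact: subIsetr.
apply: compact_closedI; first exact: compact_setX.
exact: closed_fib.
Qed.

Lemma BG2_sub_BG1 B : BG2 GG B -> BG1 GG B.
Proof.
move=> hB K cK.
have cs : compact (src GG @` K).
  by apply: continuous_compact => //; apply: continuous_subspaceT; exact: src_cont.
have ct : compact (tgt GG @` K).
  by apply: continuous_compact => //; apply: continuous_subspaceT; exact: tgt_cont.
have [K1 [cK1 sK1]] := hB _ cs.
have [K2 [cK2 sK2]] := hB _ ct.
exists (setmulG GG K K1 `|` setmulG GG K2 K); split.
  by apply: compactU; apply: compact_mul.
move=> g [[k [b [Kk Bb e ->]]]|[b [k [Bb Kk e ->]]]].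
  left; exists k, b; split => //; apply: sK1; left; split => //.
  by exists k.
right; exists b, k; split => //; apply: sK2; right; split => //.
by exists k.
Qed.
End S.

Lemma BG1_sub_BG2 (G M : topologicalType) (GG : topGroupoid G M) B :
  BG1 GG B -> BG2 GG B.
Proof.
move=> hB C cC.
have cu : compact (Defs.unit GG @` C).
  by apply: continuous_compact => //; apply: continuous_subspaceT; exact: unit_cont.
have [K' [cK' sK']] := hB _ cu.
exists K'; split => // g Hg; apply: sK'; case: Hg => [[Bg Cg]|[Bg Cg]].
  left; exists (Defs.unit GG (tgt GG g)), g; split => //.
  - by rewrite src_unit.
  - by rewrite unit_mul.
right; exists g, (Defs.unit GG (src GG g)); split => //.
- by rewrite tgt_unit.
- by rewrite mul_unit.
Qed.

Lemma BG2_compact (G M : topologicalType) (GG : topGroupoid G M) K :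
  compact K -> BG2 GG K.
Proof. by move=> cK C _; exists K; split => // g [[]|[]]. Qed.

Theorem proposition7p5 (G M : topologicalType) (GG : topGroupoid G M) :
  hausdorff_space M ->
  BG1 GG = BG2 GG /\
  [/\ bornology (BG1 GG), compatible_bornology GG (BG1 GG),
      base_bounded GG (BG1 GG) &
      (forall K : set G, compact K -> BG1 GG K)].
Proof.
move=> hM.
have E : BG1 GG = BG2 GG.
  apply/seteqP; split => B; [exact: BG1_sub_BG2 | exact: BG2_sub_BG1].
split => //; split.
- rewrite E; split.
  + move=> B A hB sAB C cC; have [K' [cK' sK']] := hB C cC.
    exists K'; split => // g [[Ag Cg]|[Ag Cg]]; apply: sK'; [left|right]; split => //;
      exact: sAB.
  + move=> A B hA hB C cC; have [K1 [cK1 s1]] := hA C cC.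
    have [K2 [cK2 s2]] := hB C cC.
    exists (K1 `|` K2); split; first exact: compactU.
    move=> g [[[Ag|Bg] Cg]|[[Ag|Bg] Cg]].
    * by left; apply: s1; left.
    * by right; apply: s2; left.
    * by left; apply: s1; right.
    * by right; apply: s2; right.
  + move=> x; exists [set x]; split => //; apply: BG2_compact; exact: compact_set1.
- split.
  + move=> B B' hB hB' K cK.
    have [K1 [cK1 s1]] := hB K cK.
    have [K2 [cK2 s2]] := hB' K1 cK1.
    have [K3 [cK3 s3]] := hB' K cK.
    have [K4 [cK4 s4]] := hB K3 cK3.
    exists (K2 `|` K4); split; first exact: compactU.
    move=> g [[k [x [Kk [b [b' [Bb Bb' e1 ->]]] e ->]]]|[x [k [[b [b' [Bb Bb' e1 ->]]] Kk e ->]]]].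
    * left; apply: s2; left.
      rewrite tgt_mul // in e.
      exists (Defs.mul GG k b), b'; split => //.
      - by apply: s1; left; exists k, b.
      - by rewrite src_mul.
      - by rewrite Defs.mulA.
    * right; apply: s4; right.
      rewrite src_mul // in e.
      exists b, (Defs.mul GG b' k); split => //.
      - by apply: s3; right; exists b', k.
      - by rewrite tgt_mul.
      - by rewrite Defs.mulA.
  + rewrite E => B hB C cC.
    have [K' [cK' sK']] := hB C cC.
    exists (Defs.inv GG @` K'); split.
      by apply: continuous_compact => //; apply: continuous_subspaceT; exact: inv_cont.
    move=> g [[[b Bb <-] Cg]|[[b Bb <-] Cg]].
    * exists b => //; apply: sK'; right; split => //.
      by rewrite /= -tgt_inv.
    * exists b => //; apply: sK'; left; split => //.
      by rewrite /= -src_inv.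
- rewrite E => C cC; exists (Defs.unit GG @` C); split.
    by apply: continuous_compact => //; apply: continuous_subspaceT; exact: unit_cont.
  move=> g [[[x _ <-] Cg]|[[x _ <-] Cg]]; exists x => //.
  + by rewrite /= tgt_unit in Cg.
  + by rewrite /= src_unit in Cg.
- by move=> K cK; rewrite E; apply: BG2_compact.
Qed.
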